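(* Under the identification $\Lambda_k=\lambda_k$ ($k=1,\dots,N-1$), the stationarity (necessary optimality) conditions of $\tilde{\mathcal J}^{\mathrm{dir},2}_d$ with respect to $(q_0,\dots,q_N,U_d^{(1)},U_d^{(2)},\Lambda_1,\dots,\Lambda_{N-1},\mu,\nu)$ and those of $\tilde{\mathcal J}^{\mathcal E}_d$ with respect to $(y_0,\dots,y_N,U_d^{(1)},U_d^{(2)},\mu,\nu)$ are equivalent.
   Context: Setting: $\mathcal Q=\mathbb R^n$, $y_k=(q_k,\lambda_k)$, controls in $\mathbb R^m$; smooth $f(q,v)\in\mathbb R^n$, $\rho(q)\in\mathbb R^{n\times m}$, $\mathrm g(q)\in\mathbb R^{m\times m}$ symmetric positive definite, terminal cost $\phi(q,v)$; $q^0,\dot q^0\in\mathbb R^n$, $h=T/N$; parameters $\alpha,\gamma\in[0,1]$. Notation: $\bar q_k^\gamma=\gamma q_k+(1-\gamma)q_{k+1}$, $\bar\lambda_k^\gamma$ likewise, $\Delta q_k=(q_{k+1}-q_k)/h$, $\Delta\lambda_k$ likewise, $f_k^\gamma=f(\bar q_k^\gamma,\Delta q_k)$, $\rho_k^\gamma=\rho(\bar q_k^\gamma)$, $\mathrm g_k^\gamma=\mathrm g(\bar q_k^\gamma)$, and $F_k^{(1)}=f_k^\gamma+\rho_k^\gamma U_k^{(1)}$, $F_k^{(2)}=f_k^{1-\gamma}+\rho_k^{1-\gamma}U_k^{(2)}$. Approximate control-dependent discrete Lagrangian: $\tilde L^{\mathcal E}_d(y_k,y_{k+1},U_k^{(1)},U_k^{(2)},h)=h\big[\alpha\big(\Delta\lambda_k^\top\Delta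 q_k+(\bar\lambda_k^\gamma)^\top F_k^{(1)}-\frac12U_k^{(1)\top}\mathrm g_k^\gamma U_k^{(1)}\big)+(1-\alpha)\big(\Delta\lambda_k^\top\Delta q_k+(\bar\lambda_k^{1-\gamma})^\top F_k^{(2)}-\frac12U_k^{(2)\top}\mathrm g_k^{1-\gamma}U_k^{(2)}\big)\big]$. Boundary velocities: $v_0^-=\Delta q_0-h\alpha\gamma F_0^{(1)}-h(1-\alpha)(1-\gamma)F_0^{(2)}$ and $v_N^+=\Delta q_{N-1}+h\alpha(1-\gamma)F_{N-1}^{(1)}+h(1-\alpha)\gamma F_{N-1}^{(2)}$. Approximate control-dependent objective: $\tilde{\mathcal J}^{\mathcal E}_d=\phi(q_N,v_N^+)+\mu^\top(q_0-q^0)+\nu^\top(v_0^--\dot q^0)+\lambda_N^\top v_N^+-\lambda_0^\top v_0^--\sum_{k=0}^{N-1}\tilde L^{\mathcal E}_d(y_k,y_{k+1},U_k^{(1)},U_k^{(2)},h)$. Direct second-order objective, with multipliers $\Lambda_1,\dots,\Lambda_{N-1}\in\mathbb R^n$: $\tilde{\mathcal J}^{\mathrm{dir},2}_d=\phi(q_N,v_N^+)+\mu^\top(q_0-q^0)+\nu^\top(v_0^--\dot q^0)+\frac h2\sum_{k=0}^{N-1}\big(\alpha U_k^{(1)\top}\mathrm g_k^\gamma U_k^{(1)}+(1-\alpha)U_k^{(2)\top}\mathrm g_k^{1-\gamma}U_k^{(2)}\big)+h\sum_{k=1}^{N-1}\Lambda_k^\top\Big\{\frac{q_{k+1}-2q_k+q_{k-1}}{h^2}-\alpha\big[\gamma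 F_k^{(1)}+(1-\gamma)F_{k-1}^{(1)}\big]-(1-\alpha)\big[(1-\gamma)F_k^{(2)}+\gamma F_{k-1}^{(2)}\big]\Big\}$. *)

(* Defs.v *)
From HB Require Import structures.
From mathcomp Require Import all_boot all_order all_algebra.
From mathcomp Require Import all_classical all_reals all_analysis.
Set Implicit Arguments. Unset Strict Implicit. Unset Printing Implicit Defensive.
Import Order.TTheory GRing.Theory Num.Theory.
Import numFieldNormedType.Exports.
Local Open Scope ring_scope.

Section DiscreteOCP.
Variables (R : realType) (n m : nat).
Notation cV := 'cV[R]_n.
Notation cW := 'cV[R]_m.

Variables (f : cV * cV -> cV) (rho : cV -> 'M[R]_(n, m)) (g : cV -> 'M[R]_m)
          (phi : cV * cV -> R) (q0 dq0 : cV) (N : nat) (h alpha gam : R).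

Definition dotv (p : nat) (u v : 'cV[R]_p) : R := (u^T *m v) 0 0.

Section Traj.
Variables (q lam : nat -> cV) (U1 U2 : nat -> cW).

Definition qbar (c : R) (k : nat) : cV := c *: q k + (1 - c) *: q k.+1.
Definition lbar (c : R) (k : nat) : cV := c *: lam k + (1 - c) *: lam k.+1.
Definition Dq (k : nat) : cV := h^-1 *: (q k.+1 - q k).
Definition Dl (k : nat) : cV := h^-1 *: (lam k.+1 - lam k).
Definition fk (c : R) (k : nat) : cV := f (qbar c k, Dq k).
Definition F1 (k : nat) : cV := fk gam k + rho (qbar gam k) *m U1 k.
Definition F2 (k : nat) : cV := fk (1 - gam) k + rho (qbar (1 - gam) k) *m U2 k.

Definition LdE (k : nat) : R :=
  h * (alpha * (dotv (Dl k) (Dq k) + dotv (lbar gam k) (F1 k)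
                - 2^-1 * dotv (U1 k) (g (qbar gam k) *m U1 k))
       + (1 - alpha) * (dotv (Dl k) (Dq k) + dotv (lbar (1 - gam) k) (F2 k)
                - 2^-1 * dotv (U2 k) (g (qbar (1 - gam) k) *m U2 k))).

Definition v0m : cV :=
  Dq 0 - (h * alpha * gam) *: F1 0 - (h * (1 - alpha) * (1 - gam)) *: F2 0.
Definition vNp : cV :=
  Dq N.-1 + (h * alpha * (1 - gam)) *: F1 N.-1 + (h * (1 - alpha) * gam) *: F2 N.-1.

End Traj.

Definition JE (q lam : nat -> cV) (U1 U2 : nat -> cW) (mu nu : cV) : R :=
  phi (q N, vNp q U1 U2) + dotv mu (q 0%N - q0) + dotv nu (v0m q U1 U2 - dq0)
  + dotv (lam N) (vNp q U1 U2) - dotv (lam 0%N) (v0m q U1 U2)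
  - \sum_(k < N) LdE q lam U1 U2 k.

(* direct second-order objective \tilde J^{dir,2}_d (multipliers Lam 1 .. Lam N.-1) *)
Definition Jdir (q : nat -> cV) (U1 U2 : nat -> cW) (Lam : nat -> cV) (mu nu : cV) : R :=
  phi (q N, vNp q U1 U2) + dotv mu (q 0%N - q0) + dotv nu (v0m q U1 U2 - dq0)
  + h / 2 * \sum_(k < N) (alpha * dotv (U1 k) (g (qbar q gam k) *m U1 k)
                          + (1 - alpha) * dotv (U2 k) (g (qbar q (1 - gam) k) *m U2 k))
  + h * \sum_(1 <= k < N) dotv (Lam k)
        ((h ^+ 2)^-1 *: (q k.+1 - 2%:R *: q k + q k.-1)
         - alpha *: (gam *: F1 q U1 k + (1 - gam) *: F1 q U1 k.-1)
         - (1 - alpha) *: ((1 - gam) *: F2 q U2 k + gam *: F2 q U2 k.-1)).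

(* stationarity = every directional (Gateaux) derivative exists and vanishes *)
Definition stationary_E (q lam : nat -> cV) (U1 U2 : nat -> cW) (mu nu : cV) : Prop :=
  forall (dq dl : nat -> cV) (du1 du2 : nat -> cW) (dmu dnu : cV),
    is_derive (0 : R) (1 : R)
      (fun t : R => JE (fun k => q k + t *: dq k) (fun k => lam k + t *: dl k)
                       (fun k => U1 k + t *: du1 k) (fun k => U2 k + t *: du2 k)
                       (mu + t *: dmu) (nu + t *: dnu)) 0.

Definition stationary_dir (q : nat -> cV) (U1 U2 : nat -> cW) (Lam : nat -> cV)
    (mu nu : cV) : Prop :=
  forall (dq : nat -> cV) (du1 du2 : nat -> cW) (dL : nat -> cV) (dmu dnu : cV),
    is_derive (0 : R) (1 : R)
      (fun t : R => Jdir (fun k => q k + t *: dq k)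
                       (fun k => U1 k + t *: du1 k) (fun k => U2 k + t *: du2 k)
                       (fun k => Lam k + t *: dL k)
                       (mu + t *: dmu) (nu + t *: dnu)) 0.

End DiscreteOCP.

(* Main.v *)
Require Import Defs.
From HB Require Import structures.
From mathcomp Require Import all_boot all_order all_algebra.
From mathcomp Require Import all_classical all_reals all_analysis.
Import Order.TTheory GRing.Theory Num.Theory.
Import numFieldNormedType.Exports.
From mathcomp Require Import ring lra.
Local Open Scope ring_scope.

Section Aux.
Set Implicit Arguments. Unset Strict Implicit.
Variables (R : realType) (p : nat).
Implicit Types (u v w : 'cV[R]_p) (a : R).
Lemma dotvDr u v w : dotv u (v + w) = dotv u v + dotv u w.
Proof. by rewrite /dotv mulmxDr mxE. Qed.
Lemma dotvDl u v w : dotv (v + w) u = dotv v u + dotv w u.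
Proof. by rewrite /dotv linearD mulmxDl mxE. Qed.
Lemma dotvZr a u v : dotv u (a *: v) = a * dotv u v.
Proof. by rewrite /dotv -scalemxAr mxE. Qed.
Lemma dotvZl a u v : dotv (a *: u) v = a * dotv u v.
Proof. by rewrite /dotv linearZ /= -scalemxAl mxE. Qed.
Lemma dotvNr u v : dotv u (- v) = - dotv u v.
Proof. by rewrite -scaleN1r dotvZr mulN1r. Qed.
Lemma dotvNl u v : dotv (- u) v = - dotv u v.
Proof. by rewrite -scaleN1r dotvZl mulN1r. Qed.
End Aux.

Section Tele.
Set Implicit Arguments. Unset Strict Implicit.
Variables (R : realType) (h al ga : R) (c c1 c2 a a' b b' : nat -> R).
Definition tA M := h^-1 * (c M.+1 - c2 M) + h*al*(1-ga)*a' M + h*(1-al)*ga*b' M.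
Definition tB := h^-1 * (c1 0%N - c 0%N) - h*al*ga*a 0%N - h*(1-al)*(1-ga)*b 0%N.
Definition tE k := al * (h^-1*(h^-1*(c k.+1 - c2 k - (c1 k - c k))) + (ga * a k + (1-ga)*a' k))
           + (1-al) * (h^-1*(h^-1*(c k.+1 - c2 k - (c1 k - c k))) + ((1-ga)*b k + ga*b' k)).
Definition tD k := (h^+2)^-1 * (c1 k.+1 - 2%:R * c k.+1 + c2 k)
   - al*(ga*a k.+1 + (1-ga)*a' k) - (1-al)*((1-ga)*b k.+1 + ga*b' k).
Lemma tele M : h != 0 -> tA M - tB - h * \sum_(k < M.+1) tE k = h * \sum_(k < M) tD k.
Proof.
move=> hh; elim: M => [|M IH].
  by rewrite big_ord1 big_ord0 /tA /tB /tE; field.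
rewrite big_ord_recr [in RHS]big_ord_recr /= [in RHS]mulrDr -IH.
by rewrite /tA /tE /tD; field.
Qed.
End Tele.
Section Main.
Set Implicit Arguments. Unset Strict Implicit.
Variables (R : realType) (n m : nat).
Variables (f : 'cV[R]_n * 'cV[R]_n -> 'cV[R]_n) (rho : 'cV[R]_n -> 'M[R]_(n, m))
  (g : 'cV[R]_n -> 'M[R]_m) (phi : 'cV[R]_n * 'cV[R]_n -> R)
  (q0 dq0 : 'cV[R]_n) (N : nat) (h alpha gam : R).
Variables (q lam : nat -> 'cV[R]_n) (U1 U2 : nat -> 'cV[R]_m) (mu nu : 'cV[R]_n).

Let c k := dotv (lam k) (q k).
Let c1 k := dotv (lam k) (q k.+1).
Let c2 k := dotv (lam k.+1) (q k).
Let a k := dotv (lam k) (F1 f rho h gam q U1 k).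
Let a' k := dotv (lam k.+1) (F1 f rho h gam q U1 k).
Let b k := dotv (lam k) (F2 f rho h gam q U2 k).
Let b' k := dotv (lam k.+1) (F2 f rho h gam q U2 k).
Let ctrl k := alpha * dotv (U1 k) (g (qbar q gam k) *m U1 k)
             + (1 - alpha) * dotv (U2 k) (g (qbar q (1 - gam) k) *m U2 k).

Lemma LdE_split k : LdE f rho g h alpha gam q lam U1 U2 k
  = h * tE h alpha gam c c1 c2 a a' b b' k - h / 2 * ctrl k.
Proof.
rewrite /LdE /tE /Dl /Dq /lbar /ctrl /c /c1 /c2 /a /a' /b /b'.
rewrite !(dotvDl, dotvNl, dotvZl, dotvDr, dotvNr, dotvZr).
ring.
Qed.

Lemma dir_split k : dotv (lam k.+1)
        ((h ^+ 2)^-1 *: (q k.+2 - 2%:R *: q k.+1 + q k.+1.-1)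
         - alpha *: (gam *: F1 f rho h gam q U1 k.+1 + (1 - gam) *: F1 f rho h gam q U1 k.+1.-1)
         - (1 - alpha) *: ((1 - gam) *: F2 f rho h gam q U2 k.+1 + gam *: F2 f rho h gam q U2 k.+1.-1))
  = tD h alpha gam c c1 c2 a a' b b' k.
Proof.
rewrite /tD /c /c1 /c2 /a /a' /b /b' /=.
rewrite !(dotvDl, dotvNl, dotvZl, dotvDr, dotvNr, dotvZr).
ring.
Qed.

Lemma JE_Jdir : (0 < N)%N -> h != 0 ->
  JE f rho g phi q0 dq0 N h alpha gam q lam U1 U2 mu nu
  = Jdir f rho g phi q0 dq0 N h alpha gam q U1 U2 lam mu nu.
Proof.
case: N => [//|M] _ hh.
have K : dotv (lam M.+1) (vNp f rho M.+1 h alpha gam q U1 U2)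
   - dotv (lam 0%N) (v0m f rho h alpha gam q U1 U2)
   - \sum_(k < M.+1) LdE f rho g h alpha gam q lam U1 U2 k
   = h / 2 * \sum_(k < M.+1) ctrl k
   + h * \sum_(1 <= k < M.+1) dotv (lam k)
        ((h ^+ 2)^-1 *: (q k.+1 - 2%:R *: q k + q k.-1)
         - alpha *: (gam *: F1 f rho h gam q U1 k + (1 - gam) *: F1 f rho h gam q U1 k.-1)
         - (1 - alpha) *: ((1 - gam) *: F2 f rho h gam q U2 k + gam *: F2 f rho h gam q U2 k.-1)).
  under eq_bigr => k _ do rewrite LdE_split.
  rewrite big_add1 /= big_mkord.
  under [X in _ = _ + h * X]eq_bigr => k _ do rewrite dir_split.
  rewrite -(@tele R h alpha gam c c1 c2 a a' b b' M hh) sumrB -!mulr_sumr.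
  rewrite /tA /tB /vNp /v0m /Dq /c /c1 /c2 /a /a' /b /b' /=.
  rewrite !(dotvDl, dotvNl, dotvZl, dotvDr, dotvNr, dotvZr).
  ring.
rewrite /JE /Jdir -[RHS]addrA -K /ctrl; ring.
Qed.
End Main.


Theorem mainTheorem8 (R : realType) (n m : nat)
  (f : 'cV[R]_n * 'cV[R]_n -> 'cV[R]_n) (rho : 'cV[R]_n -> 'M[R]_(n, m))
  (g : 'cV[R]_n -> 'M[R]_m) (phi : 'cV[R]_n * 'cV[R]_n -> R)
  (q0 dq0 : 'cV[R]_n) (T : R) (N : nat) (alpha gam : R)
  (hf : forall x, differentiable f x) (hrho : forall x, differentiable rho x)
  (hg : forall x, differentiable g x) (hphi : forall x, differentiable phi x)
  (hgsym : forall x, (g x)^T = g x)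
  (hgpd : forall x (u : 'cV[R]_m), u != 0 -> 0 < dotv u (g x *m u))
  (hT : 0 < T) (hN : (0 < N)%N)
  (halpha : 0 <= alpha <= 1) (hgam : 0 <= gam <= 1)
  (q lam : nat -> 'cV[R]_n) (U1 U2 : nat -> 'cV[R]_m) (mu nu : 'cV[R]_n) :
  let h := T / N%:R in
  stationary_dir f rho g phi q0 dq0 N h alpha gam q U1 U2 lam mu nu <->
  stationary_E f rho g phi q0 dq0 N h alpha gam q lam U1 U2 mu nu.
Proof.
move=> h.
have hh : h != 0.
  by rewrite /h lt0r_neq0 // divr_gt0 // ltr0n.
have E : forall q lam U1 U2 mu nu,
    JE f rho g phi q0 dq0 N h alpha gam q lam U1 U2 mu nu
    = Jdir f rho g phi q0 dq0 N h alpha gam q U1 U2 lam mu nu.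
  by move=> *; exact: JE_Jdir.
rewrite /stationary_dir /stationary_E; split=> H.
  move=> dq dl du1 du2 dmu dnu.
  have := H dq du1 du2 dl dmu dnu.
  by under eq_fun => t do rewrite -E.
move=> dq du1 du2 dl dmu dnu.
have := H dq dl du1 du2 dmu dnu.
by under eq_fun => t do rewrite E.
Qed.
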